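(* Under the setting and assumptions in the context, let $N_{AH}=\Pr(R=0,Y=1\mid Z=0)-\Pr(R=0,Y=1\mid Z=1)$ and suppose $N_{AH}\ge 0$ and $\max_{z}\Pr(R=0,Y=1\mid Z=z)>0$. Then $$\frac{N_{AH}}{\min_z\Pr(Y=1\mid Z=z)}\ \le\ APCE_{AH}\ \le\ \frac{N_{AH}}{\max_z\Pr(R=0,Y=1\mid Z=z)},$$ where maxima and minima are over $z\in\{0,1\}$.
   Context: Units are drawn from a population (a probability space). Each unit has a binary assignment $Z\in\{0,1\}$ with $0<\Pr(Z=1)<1$, binary potential recommendations $R(0),R(1)\in\{0,1\}$, and binary potential outcomes $Y(0),Y(1)\in\{0,1\}$ indexed by the recommendation only (exclusion restriction). Observed quantities are $R=R(Z)$ and $Y=Y(R(Z))$. Assumptions: (Randomization) $Z$ is independent of $(R(0),R(1),Y(0),Y(1))$; (Monotonicity) $Y(1)\ge Y(0)$ almost surely. Always High stratum $AH=\{Y(0)=Y(1)=1\}$; $APCE_{AH}=E[R(1)-R(0)\mid AH]$. *)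

(* Defs.v *)
From HB Require Import structures.
From mathcomp Require Import all_boot all_order all_algebra.
From mathcomp Require Import all_classical all_reals all_analysis.
Set Implicit Arguments. Unset Strict Implicit. Unset Printing Implicit Defensive.
Import Order.TTheory GRing.Theory Num.Theory.
Local Open Scope classical_set_scope.
Local Open Scope ring_scope.

Section Defs.
Context {R : realType} {d : measure_display} {Omega : measurableType d}.
Variable P : probability Omega R.

Definition Pr (A : set Omega) : R := fine (P A).

Definition condPr (A B : set Omega) : R := Pr (A `&` B) / Pr B.

Definition condE (f : Omega -> R) (B : set Omega) : R :=
  Rintegral P B f / Pr B.

Definition indep_Z_V (Z R0 R1 Y0 Y1 : Omega -> bool) : Prop :=
  forall (z r0 r1 y0 y1 : bool),
    Pr [set w | Z w = z /\ (R0 w, R1 w, Y0 w, Y1 w) = (r0, r1, y0, y1)]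
    = Pr [set w | Z w = z] * Pr [set w | (R0 w, R1 w, Y0 w, Y1 w) = (r0, r1, y0, y1)].

End Defs.

Definition obsR {T : Type} (Z R0 R1 : T -> bool) : T -> bool :=
  fun w => if Z w then R1 w else R0 w.
Definition obsY {T : Type} (Z R0 R1 Y0 Y1 : T -> bool) : T -> bool :=
  fun w => if obsR Z R0 R1 w then Y1 w else Y0 w.
Definition AH {T : Type} (Y0 Y1 : T -> bool) : set T := fun w => Y0 w /\ Y1 w.

(* Main.v *)
Require Import Defs.
From HB Require Import structures.
From mathcomp Require Import all_boot all_order all_algebra.
From mathcomp Require Import all_classical all_reals all_analysis.
From mathcomp Require Import lra.
Import Order.TTheory GRing.Theory Num.Theory.
Local Open Scope classical_set_scope.
Local Open Scope ring_scope.

Lemma PrE (R : realType) (d : measure_display) (Omega : measurableType d)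
  (P : probability Omega R) A : measurable A -> ((Pr P A)%:E = P A)%E.
Proof. by move=> mA; rewrite /Pr fineK // fin_num_measure. Qed.

Lemma Pr_ge0 (R : realType) (d : measure_display) (Omega : measurableType d)
  (P : probability Omega R) A : 0 <= Pr P A.
Proof. by rewrite /Pr fine_ge0. Qed.

Lemma Pr_le (R : realType) (d : measure_display) (Omega : measurableType d)
  (P : probability Omega R) A B : measurable A -> measurable B -> A `<=` B ->
  Pr P A <= Pr P B.
Proof.
move=> mA mB AB; rewrite -lee_fin !PrE //.
by apply: le_measure => //; rewrite inE.
Qed.

Lemma PrU (R : realType) (d : measure_display) (Omega : measurableType d)
  (P : probability Omega R) A B : measurable A -> measurable B -> A `&` B = set0 ->
  Pr P (A `|` B) = Pr P A + Pr P B.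
Proof.
move=> mA mB AB; have := measureU P mA mB AB.
by move=> h; rewrite /Pr h fineD // fin_num_measure.
Qed.

Lemma Pr_split (R : realType) (d : measure_display) (Omega : measurableType d)
  (P : probability Omega R) A B : measurable A -> measurable B ->
  Pr P A = Pr P (A `&` B) + Pr P (A `&` ~` B).
Proof.
move=> mA mB; rewrite -PrU; first by rewrite -setIUr setUCr setIT.
- exact: measurableI.
- by apply: measurableI => //; exact: measurableC.
- by rewrite setIACA setICr !setI0 // setIA setIid. 
Qed.

Lemma meas_eqb (d : measure_display) (Omega : measurableType d) (g : Omega -> bool) b :
  measurable [set w | g w] -> measurable [set w | g w = b].
Proof.
move=> mg; case: b => //.
rewrite (_ : [set w | g w = false] = ~` [set w | g w]); first exact: measurableC.
by apply/seteqP; split => w /=; case: (g w).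
Qed.

Definition T4 := (bool * bool * bool * bool)%type.

Lemma meas_V (d : measure_display) (Omega : measurableType d) (R0 R1 Y0 Y1 : Omega -> bool)
  (mR0 : measurable [set w | R0 w])
  (mR1 : measurable [set w | R1 w]) (mY0 : measurable [set w | Y0 w])
  (mY1 : measurable [set w | Y1 w]) (v : T4) :
  measurable [set w | (R0 w, R1 w, Y0 w, Y1 w) = v].
Proof.
case: v => [[[a b] c] e].
rewrite (_ : [set w | _] = [set w | R0 w = a] `&` [set w | R1 w = b] `&`
   [set w | Y0 w = c] `&` [set w | Y1 w = e]).
  by repeat apply: measurableI; apply: meas_eqb.
apply/seteqP; split => w /=; first by case=> -> -> -> ->.
by case=> [[[-> ->] ->] ->].
Qed.

Lemma meas_Vseq (d : measure_display) (Omega : measurableType d) (R0 R1 Y0 Y1 : Omega -> bool)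
  (mR0 : measurable [set w | R0 w])
  (mR1 : measurable [set w | R1 w]) (mY0 : measurable [set w | Y0 w])
  (mY1 : measurable [set w | Y1 w]) (s : seq T4) :
  measurable [set w | (R0 w, R1 w, Y0 w, Y1 w) \in s].
Proof.
elim: s => [|v s IH].
  by rewrite (_ : [set w | _] = set0) //; apply/seteqP; split => w //=; rewrite in_nil.
rewrite (_ : [set w | _] = [set w | (R0 w, R1 w, Y0 w, Y1 w) = v] `|`
   [set w | (R0 w, R1 w, Y0 w, Y1 w) \in s]).
  by apply: measurableU => //; exact: meas_V.
apply/seteqP; split => w /=; rewrite in_cons.
  by case/orP => [/eqP ->|]; [left|right].
by case => [->|->]; rewrite ?eqxx ?orbT.
Qed.

Lemma meas_VS (d : measure_display) (Omega : measurableType d) (R0 R1 Y0 Y1 : Omega -> bool)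
  (mR0 : measurable [set w | R0 w])
  (mR1 : measurable [set w | R1 w]) (mY0 : measurable [set w | Y0 w])
  (mY1 : measurable [set w | Y1 w]) (S : pred T4) :
  measurable [set w | S (R0 w, R1 w, Y0 w, Y1 w)].
Proof.
rewrite (_ : [set w | _] = [set w | (R0 w, R1 w, Y0 w, Y1 w) \in enum S]).
  exact: meas_Vseq.
by apply/seteqP; split => w /=; rewrite mem_enum.
Qed.

Lemma Pr_seq (R : realType) (d : measure_display) (Omega : measurableType d)
  (P : probability Omega R) (R0 R1 Y0 Y1 : Omega -> bool)
  (mR0 : measurable [set w | R0 w])
  (mR1 : measurable [set w | R1 w]) (mY0 : measurable [set w | Y0 w])
  (mY1 : measurable [set w | Y1 w]) X (mX : measurable X) (s : seq T4) :
  uniq s ->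
  Pr P (X `&` [set w | (R0 w, R1 w, Y0 w, Y1 w) \in s]) =
  \sum_(v <- s) Pr P (X `&` [set w | (R0 w, R1 w, Y0 w, Y1 w) = v]).
Proof.
elim: s => [|v s IH].
  rewrite big_nil (_ : _ `&` _ = set0); first by rewrite /Pr measure0.
  by apply/seteqP; split => w //= [].
rewrite big_cons /= => /andP[vs us]; rewrite -IH //.
rewrite -PrU.
- congr Pr; apply/seteqP; split => w /=; rewrite in_cons.
    by case=> Xw /orP[/eqP ->|]; [left|right].
  by case => -[Xw ->]; rewrite ?eqxx ?Xw => //; split => //; rewrite orbT.
- by apply: measurableI => //; exact: meas_V.
- by apply: measurableI => //; exact: meas_Vseq.
- apply/seteqP; split => w //= [[_ e] [_ h]]; move: vs; by rewrite -e h.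
Qed.

Lemma indep_S (R : realType) (d : measure_display) (Omega : measurableType d)
  (P : probability Omega R) (Z R0 R1 Y0 Y1 : Omega -> bool)
  (mZ : measurable [set w | Z w]) (mR0 : measurable [set w | R0 w])
  (mR1 : measurable [set w | R1 w]) (mY0 : measurable [set w | Y0 w])
  (mY1 : measurable [set w | Y1 w])
  (hrand : indep_Z_V P Z R0 R1 Y0 Y1) (z : bool) (S : pred T4) :
  Pr P ([set w | Z w = z] `&` [set w | S (R0 w, R1 w, Y0 w, Y1 w)]) =
  Pr P [set w | Z w = z] * Pr P [set w | S (R0 w, R1 w, Y0 w, Y1 w)].
Proof.
have E : [set w | S (R0 w, R1 w, Y0 w, Y1 w)] =
         [set w | (R0 w, R1 w, Y0 w, Y1 w) \in enum S].
  by apply/seteqP; split => w /=; rewrite mem_enum.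
have mZz := @meas_eqb _ _ Z z mZ.
rewrite E Pr_seq ?enum_uniq //.
rewrite -(setTI [set w | (R0 w, R1 w, Y0 w, Y1 w) \in enum S]).
rewrite Pr_seq ?enum_uniq // mulr_sumr; apply: eq_bigr => v _.
rewrite setTI; case: v => [[[a b] c] e]; exact: (hrand z a b c e).
Qed.

Lemma Pr_setT (R : realType) (d : measure_display) (Omega : measurableType d)
  (P : probability Omega R) : Pr P setT = 1.
Proof. by rewrite /Pr probability_setT. Qed.

Lemma Rint_indic (R : realType) (d : measure_display) (Omega : measurableType d)
  (P : probability Omega R) A D : measurable A -> measurable D ->
  Rintegral P D (\1_A) = Pr P (A `&` D).
Proof. by move=> mA mD; rewrite /Rintegral integral_indic. Qed.

Lemma Rint_diff (R : realType) (d : measure_display) (Omega : measurableType d)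
  (P : probability Omega R) (R0 R1 : Omega -> bool) D
  (mR0 : measurable [set w | R0 w]) (mR1 : measurable [set w | R1 w]) (mD : measurable D) :
  Rintegral P D (fun w => (R1 w)%:R - (R0 w)%:R) =
  Pr P ([set w | R1 w] `&` D) - Pr P ([set w | R0 w] `&` D).
Proof.
rewrite (_ : (fun w => _) = (fun w => \1_[set w | R1 w] w - \1_[set w | R0 w] w)); last first.
  apply: funext => w; rewrite !indicE.
  have E (g : Omega -> bool) : (w \in [set w | g w]) = g w.
    by apply/idP/idP; rewrite in_setE.
  by rewrite !E.
rewrite RintegralB //.
- by rewrite !Rint_indic.
- by apply: (integrableS measurableT) => //; exact: integrable_indic.
- by apply: (integrableS measurableT) => //; exact: integrable_indic.
Qed.

Lemma qs_ext (R : realType) (d : measure_display) (Omega : measurableType d)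
  (P : probability Omega R) (R0 R1 Y0 Y1 : Omega -> bool) (S T : pred T4) :
  S =1 T -> Pr P [set w | S (R0 w, R1 w, Y0 w, Y1 w)] = Pr P [set w | T (R0 w, R1 w, Y0 w, Y1 w)].
Proof. by move=> ST; congr Pr; apply/seteqP; split => w /=; rewrite ST. Qed.

Lemma qs_le (R : realType) (d : measure_display) (Omega : measurableType d)
  (P : probability Omega R) (R0 R1 Y0 Y1 : Omega -> bool)
  (mR0 : measurable [set w | R0 w])
  (mR1 : measurable [set w | R1 w]) (mY0 : measurable [set w | Y0 w])
  (mY1 : measurable [set w | Y1 w]) (S T : pred T4) :
  (forall v, S v -> T v) ->
  Pr P [set w | S (R0 w, R1 w, Y0 w, Y1 w)] <= Pr P [set w | T (R0 w, R1 w, Y0 w, Y1 w)].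
Proof. by move=> ST; apply: Pr_le; try exact: meas_VS; move=> w /= /ST. Qed.

Lemma qs_split (R : realType) (d : measure_display) (Omega : measurableType d)
  (P : probability Omega R) (R0 R1 Y0 Y1 : Omega -> bool)
  (mR0 : measurable [set w | R0 w])
  (mR1 : measurable [set w | R1 w]) (mY0 : measurable [set w | Y0 w])
  (mY1 : measurable [set w | Y1 w]) (S T : pred T4) :
  Pr P [set w | S (R0 w, R1 w, Y0 w, Y1 w)] =
  Pr P [set w | S (R0 w, R1 w, Y0 w, Y1 w) && T (R0 w, R1 w, Y0 w, Y1 w)] +
  Pr P [set w | S (R0 w, R1 w, Y0 w, Y1 w) && ~~ T (R0 w, R1 w, Y0 w, Y1 w)].
Proof.
rewrite (Pr_split _ _ _ P _ _ (meas_VS _ _ _ _ _ _ mR0 mR1 mY0 mY1 S) (meas_VS _ _ _ _ _ _ mR0 mR1 mY0 mY1 T)).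
congr (Pr P _ + Pr P _); apply/seteqP; split => w /=.
- by case=> -> ->.
- by case/andP=> -> ->.
- by case=> -> /negP ->.
- by case/andP=> -> /negP.
Qed.

Theorem mainTheorem7 (R : realType) (d : measure_display) (Omega : measurableType d)
  (P : probability Omega R) (Z R0 R1 Y0 Y1 : Omega -> bool)
  (mZ : measurable [set w | Z w]) (mR0 : measurable [set w | R0 w])
  (mR1 : measurable [set w | R1 w]) (mY0 : measurable [set w | Y0 w])
  (mY1 : measurable [set w | Y1 w])
  (hZ : 0 < Pr P [set w | Z w] < 1)
  (hrand : indep_Z_V P Z R0 R1 Y0 Y1)
  (hmono : {ae P, forall w, Y0 w ==> Y1 w}) :
  let pRY z := condPr P [set w | obsR Z R0 R1 w = false /\ obsY Z R0 R1 Y0 Y1 w = true]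
                        [set w | Z w = z] in
  let pY z := condPr P [set w | obsY Z R0 R1 Y0 Y1 w = true] [set w | Z w = z] in
  let N_AH := pRY false - pRY true in
  let APCE_AH := condE P (fun w => (R1 w)%:R - (R0 w)%:R) (AH Y0 Y1) in
  0 <= N_AH ->
  0 < Num.max (pRY false) (pRY true) ->
  N_AH / Num.min (pY false) (pY true) <= APCE_AH /\
  APCE_AH <= N_AH / Num.max (pRY false) (pRY true).
Proof.
move=> pRY pY N APCE hN hmax.
pose q (S : pred T4) := Pr P [set w | S (R0 w, R1 w, Y0 w, Y1 w)].
have mV := meas_VS _ _ _ _ _ _ mR0 mR1 mY0 mY1.
have pz_pos z : 0 < Pr P [set w | Z w = z].
  case: z; first by case/andP: hZ.
  have := Pr_split _ _ _ P _ _ measurableT mZ.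
  rewrite Pr_setT !setTI => h.
  have -> : [set w | Z w = false] = ~` [set w | Z w].
    by apply/seteqP; split => w /=; case: (Z w).
  by move: hZ; rewrite h => /andP[_]; rewrite ltrDl.
have rz z (v : T4) := if z then v.1.1.2 else v.1.1.1.
have hRY z : pRY z = q (fun v => ~~ (if z then v.1.1.2 else v.1.1.1) && v.1.2).
  rewrite /pRY /condPr.
  pose S := fun v : T4 => ~~ (if z then v.1.1.2 else v.1.1.1) && v.1.2.
  have -> : [set w | obsR Z R0 R1 w = false /\ obsY Z R0 R1 Y0 Y1 w = true]
       `&` [set w | Z w = z] =
       [set w | Z w = z] `&` [set w | S (R0 w, R1 w, Y0 w, Y1 w)].
    apply/seteqP; split => w /=; rewrite /obsY /obsR /S /=.
      move=> [[h1 h2] h3]; subst z; move: h1 h2.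
      by case: (Z w) => /= h1; rewrite h1 /= => h2; rewrite h2.
    move=> [h3]; subst z; case: (Z w) => /= /andP[/negbTE h1 h2]; by rewrite h1.
  by rewrite (indep_S _ _ _ P Z R0 R1 Y0 Y1 mZ mR0 mR1 mY0 mY1 hrand z S) mulrAC mulfV ?mul1r // gt_eqF // pz_pos.
have hY z : pY z = q (fun v => if (if z then v.1.1.2 else v.1.1.1) then v.2 else v.1.2).
  rewrite /pY /condPr.
  pose S := fun v : T4 => if (if z then v.1.1.2 else v.1.1.1) then v.2 else v.1.2.
  have -> : [set w | obsY Z R0 R1 Y0 Y1 w = true] `&` [set w | Z w = z] =
       [set w | Z w = z] `&` [set w | S (R0 w, R1 w, Y0 w, Y1 w)].
    apply/seteqP; split => w /=; rewrite /obsY /obsR /S /=.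
      by move=> [h1 h3]; subst z.
    by move=> [h3 h1]; subst z.
  by rewrite (indep_S _ _ _ P Z R0 R1 Y0 Y1 mZ mR0 mR1 mY0 mY1 hrand z S) mulrAC mulfV ?mul1r // gt_eqF // pz_pos.
have null : q (fun v => v.1.2 && ~~ v.2) = 0.
  have [Nn [mN PN0 sub]] := hmono.
  apply/eqP; rewrite eq_le Pr_ge0 andbT.
  have e0 : Pr P Nn = 0 by rewrite /Pr PN0.
  rewrite -[X in _ <= X]e0; apply: (Pr_le _ _ _ P _ _ (mV _) mN).
  move=> w /= /andP[h1 h2]; apply: (sub w) => /=; rewrite h1 /=; exact/negP.
have hAH : AH Y0 Y1 = [set w | (fun v : T4 => v.1.2 && v.2) (R0 w, R1 w, Y0 w, Y1 w)].
  by apply/seteqP; split => w /=; [case=> -> -> | case/andP].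
pose a := q (fun v => v.1.2 && v.2).
pose x (z : bool) := q (fun v => (v.1.2 && v.2) && (if z then v.1.1.2 else v.1.1.1)).
pose u (z : bool) := q (fun v => (v.1.2 && v.2) && ~~ (if z then v.1.1.2 else v.1.1.1)).
have sp z : a = x z + u z.
  exact: (qs_split _ _ _ P R0 R1 Y0 Y1 mR0 mR1 mY0 mY1 (fun v => v.1.2 && v.2)
            (fun v => if z then v.1.1.2 else v.1.1.1)).
have hRY' z : pRY z = u z.
  rewrite hRY; apply: eq_trans (qs_split _ _ _ P R0 R1 Y0 Y1 mR0 mR1 mY0 mY1 (fun v => ~~ (if z then v.1.1.2 else v.1.1.1) && v.1.2) (fun v => v.2)) _.
  have h0 : q (fun v => (~~ (if z then v.1.1.2 else v.1.1.1) && v.1.2) && ~~ v.2) = 0.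
    apply/eqP; rewrite eq_le Pr_ge0 andbT -[X in _ <= X]null.
    by apply: (qs_le _ _ _ P R0 R1 Y0 Y1 mR0 mR1 mY0 mY1) => -[[[r0 r1] y0] y1] /= /andP[/andP[_ ->] ->].
  rewrite [X in _ + X]h0.
  rewrite addr0; apply: (qs_ext _ _ _ P R0 R1 Y0 Y1 (fun v => (~~ (if z then v.1.1.2 else v.1.1.1) && v.1.2) && v.2) (fun v => (v.1.2 && v.2) && ~~ (if z then v.1.1.2 else v.1.1.1))) => -[[[r0 r1] y0] y1] /=.
  by clear h0; case: z; case: r0; case: r1; case: y0; case: y1.
have hYge z : a <= pY z.
  rewrite hY; apply: (qs_le _ _ _ P R0 R1 Y0 Y1 mR0 mR1 mY0 mY1 (fun v => v.1.2 && v.2) (fun v => if (if z then v.1.1.2 else v.1.1.1) then v.2 else v.1.2)) => -[[[r0 r1] y0] y1] /= /andP[-> ->]; by case: ifP.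
have hAPCE : APCE = (x true - x false) / a.
  rewrite /APCE /condE hAH (Rint_diff _ _ _ P R0 R1 _ mR0 mR1 (mV (fun v => v.1.2 && v.2))).
  congr ((Pr P _ - Pr P _) / _); apply/seteqP; split => w /=;
    by [case=> -> -> | case/andP=> -> -> | case/andP=> /andP[-> ->]].
have xge z : 0 <= x z by exact: Pr_ge0.
have ule z : u z <= a by rewrite (sp z) lerDr.
have hNe : N = x true - x false.
  rewrite /N !hRY'.
  have := sp true; have := sp false; lra.
have maxle : Num.max (pRY false) (pRY true) <= a by rewrite ge_max !hRY' !ule.
have apos : 0 < a := lt_le_trans hmax maxle.
rewrite hAPCE -hNe; split.
  apply: ler_wpM2l => //; rewrite lef_pV2 ?posrE //.
    by rewrite le_min !hYge.
  by rewrite lt_min; apply/andP; split; apply: lt_le_trans apos (hYge _).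
apply: ler_wpM2l => //; rewrite lef_pV2 ?posrE //.
Qed.
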